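(* Let $p$ and $q$ be (not necessarily distinct) primes, let $k=\mathbb{Z}[\zeta_p,\zeta_q]\subseteq\mathbb{C}$ with $\zeta_p,\zeta_q$ primitive $p$-th and $q$-th roots of unity, let $M$ be a $k$-module, $E=\mathrm{End}_{k}(M)$, $\pi=1-\zeta_p$, $\tau=1-\zeta_q$, and let $A\subseteq E$ be a $k$-subalgebra that is both $p$-good and $q$-good. (1) If $s\in A$ is such that $1+\pi\tau s$ is a unit of $A$ generating a subgroup of $A^*$ in which every element has finite order, then $s=0$. (2) If $s,r\in A$ are such that $1+\pi s$ and $1+\tau r$ are units of $A$ and the subgroup of $A^*$ they generate is torsion (every element has finite order), then $1+\pi s$ and $1+\tau r$ commute.
   Context: For a commutative ring $k$, an element $p\in k$ and a $k$-module $M$, a $k$-subalgebra $A\subseteq\mathrm{End}_k(M)$ is called $p$-good if the endomorphism $p(1-ps)$ of $M$ is injective for every $s\in A$. *)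

(* Defs.v *)
From HB Require Import structures.
From mathcomp Require Import all_boot all_order all_algebra all_field.
From Stdlib Require Import ClassicalEpsilon.
Set Implicit Arguments. Unset Strict Implicit. Unset Printing Implicit Defensive.
Import Order.TTheory GRing.Theory Num.Theory.
Local Open Scope ring_scope.

(* x lies in Z[a,b] iff x lies in every subring of algC containing a and b. *)
Definition in_Zgen (a b x : algC) : Prop :=
  forall S : {pred algC}, subring_closed S -> a \in S -> b \in S -> x \in S.

Definition Zgen_pred (a b : algC) : pred algC :=
  fun x => if excluded_middle_informative (in_Zgen a b x) then true else false.

Lemma Zgen_predP a b x : reflect (in_Zgen a b x) (x \in Zgen_pred a b).
Proof.
rewrite unfold_in /Zgen_pred.
by case: excluded_middle_informative => H; constructor.
Qed.

Lemma Zgen_closed a b : subring_closed (Zgen_pred a b).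
Proof.
split.
- by apply/Zgen_predP => S [].
- move=> x y /Zgen_predP Hx /Zgen_predP Hy; apply/Zgen_predP => S HS Ha Hb.
  case: (HS) => S1 SB SM; exact: SB (Hx S HS Ha Hb) (Hy S HS Ha Hb).
- move=> x y /Zgen_predP Hx /Zgen_predP Hy; apply/Zgen_predP => S HS Ha Hb.
  case: (HS) => S1 SB SM; exact: SM (Hx S HS Ha Hb) (Hy S HS Ha Hb).
Qed.

Lemma Zgen_gen_l a b : a \in Zgen_pred a b.
Proof. by apply/Zgen_predP => S _ Ha _. Qed.
Lemma Zgen_gen_r a b : b \in Zgen_pred a b.
Proof. by apply/Zgen_predP => S _ _ Hb. Qed.

HB.instance Definition _ (a b : algC) :=
  GRing.isSubringClosed.Build algC (Zgen_pred a b) (Zgen_closed a b).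

Record Zgen (a b : algC) := ZGen { zval : algC; _ : zval \in Zgen_pred a b }.
HB.instance Definition _ a b := [isSub for @zval a b].
HB.instance Definition _ a b := [Choice of Zgen a b by <:].
HB.instance Definition _ a b := [SubChoice_isSubComNzRing of Zgen a b by <:].

Definition zgl (a b : algC) : Zgen a b := ZGen (Zgen_gen_l a b).
Definition zgr (a b : algC) : Zgen a b := ZGen (Zgen_gen_r a b).

(* End_k(M) is modelled by k-linear maps M -> M; multiplication is
   composition, the unit is the identity. *)
Definition k_subalgebra (k : comNzRingType) (M : lmodType k)
  (A : (M -> M) -> Prop) : Prop :=
  [/\ forall f, A f -> linear f,
      A id,
      forall f g, A f -> A g -> A (fun x => f x + g x),
      forall (c : k) f, A f -> A (fun x => c *: f x)
    & forall f g, A f -> A g -> A (f \o g)].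

Definition p_good (k : comNzRingType) (M : lmodType k) (p : k)
  (A : (M -> M) -> Prop) : Prop :=
  forall s, A s -> injective (fun x => p *: (x - p *: s x)).

Definition unit_of (M : Type) (A : (M -> M) -> Prop) (u : M -> M) : Prop :=
  A u /\ exists v, [/\ A v, u \o v = id & v \o u = id].

Inductive gen_grp (M : Type) (G : (M -> M) -> Prop) : (M -> M) -> Prop :=
| gg_one : gen_grp G id
| gg_gen g : G g -> gen_grp G g
| gg_mul f g : gen_grp G f -> gen_grp G g -> gen_grp G (f \o g)
| gg_inv f g : gen_grp G f -> f \o g = id -> g \o f = id -> gen_grp G g.

Definition finite_order (M : Type) (f : M -> M) : Prop :=
  exists n : nat, (0 < n)%N /\ iter n (fun h => f \o h) id = id.

Definition torsion_gen (M : Type) (G : (M -> M) -> Prop) : Prop :=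
  forall f, gen_grp G f -> finite_order f.

(* Main.v *)
Require Import Defs.
From HB Require Import structures.
From mathcomp Require Import all_boot all_order all_algebra all_field.
From mathcomp Require Import ring.
From Stdlib Require Import FunctionalExtensionality.
Set Implicit Arguments. Unset Strict Implicit. Unset Printing Implicit Defensive.
Import GRing.Theory.
Local Open Scope ring_scope.

Section Lin.
Variables (k : comNzRingType) (M : lmodType k).

Lemma lin0 (f : M -> M) : linear f -> f 0 = 0.
Proof. move=> H; have := H 1 0 0; rewrite scale1r !addr0 => /(congr1 (fun y => y - f 0)); rewrite addrK subrr scale1r => H0; by rewrite -H0. Qed.
Lemma linD (f : M -> M) : linear f -> forall x y, f (x + y) = f x + f y.
Proof. move=> H x y; have := H 1 x y; by rewrite !scale1r. Qed.
Lemma linZ (f : M -> M) : linear f -> forall a x, f (a *: x) = a *: f x.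
Proof. move=> H a x; have := H a x 0; rewrite !addr0 lin0 // addr0; exact. Qed.
Lemma linN (f : M -> M) : linear f -> forall x, f (- x) = - f x.
Proof. by move=> H x; rewrite -scaleN1r linZ // scaleN1r. Qed.
Lemma linB (f : M -> M) : linear f -> forall x y, f (x - y) = f x - f y.
Proof. by move=> H x y; rewrite linD // linN. Qed.
Lemma lin_sum (f : M -> M) : linear f -> forall n (F : 'I_n -> M), f (\sum_(i < n) F i) = \sum_(i < n) f (F i).
Proof. by move=> H n F; apply: (big_morph f (linD H) (lin0 H)). Qed.
Lemma lin_iter (f : M -> M) n : linear f -> linear (iter n f).
Proof. by move=> H; elim: n => [|n IH] a u v //=; rewrite IH H. Qed.

Variable A : (M -> M) -> Prop.
Hypothesis HA : k_subalgebra A.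

Lemma A_lin f : A f -> linear f. Proof. by case: HA => H _ _ _ _; apply: H. Qed.
Lemma A_id : A id. Proof. by case: HA. Qed.
Lemma A_add f g : A f -> A g -> A (fun x => f x + g x). Proof. by case: HA => _ _ H _ _; apply: H. Qed.
Lemma A_scale c f : A f -> A (fun x => c *: f x). Proof. by case: HA => _ _ _ H _; apply: H. Qed.
Lemma A_comp f g : A f -> A g -> A (f \o g). Proof. by case: HA => _ _ _ _ H; apply: H. Qed.
Lemma A_zero : A (fun _ => 0).
Proof. have := A_scale 0 A_id; congr A; apply: functional_extensionality => x; by rewrite scale0r. Qed.
Lemma A_iter f n : A f -> A (iter n f).
Proof. move=> Hf; elim: n => [|n IH]; first exact: A_id. exact: A_comp Hf IH. Qed.
Lemma A_sub f g : A f -> A g -> A (fun x => f x - g x).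
Proof. move=> Hf Hg; have := A_add Hf (A_scale (-1) Hg); congr A; apply: functional_extensionality => x; by rewrite scaleN1r. Qed.

Definition ev (w : M -> M) (P : {poly k}) : M -> M :=
  fun z => \sum_(i < size P) P`_i *: iter i w z.

Lemma ev_bound (w : M -> M) (P : {poly k}) n (z : M) : (size P <= n)%N -> ev w P z = \sum_(i < n) P`_i *: iter i w z.
Proof.
move=> Hn; rewrite /ev (big_ord_widen _ (fun i => P`_i *: iter i w z) Hn) big_mkcond /=.
apply: eq_bigr => i _; case: ifP => // /negbT; rewrite -leqNgt => Hi.
by rewrite nth_default // scale0r.
Qed.

Lemma evD (w : M -> M) P Q z : ev w (P + Q) z = ev w P z + ev w Q z.
Proof.
pose n := maxn (size P) (size Q).
rewrite (@ev_bound w (P + Q) n) ?(leq_trans (size_polyD _ _)) //.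
rewrite (@ev_bound w P n) ?leq_maxl // (@ev_bound w Q n) ?leq_maxr //.
by rewrite -big_split /=; apply: eq_bigr => i _; rewrite coefD scalerDl.
Qed.

Lemma ev0 (w : M -> M) z : ev w 0 z = 0.
Proof. by rewrite /ev size_poly0 big_ord0. Qed.

Lemma evN (w : M -> M) P z : ev w (- P) z = - ev w P z.
Proof. by apply/eqP; rewrite -subr_eq0 opprK -evD addNr ev0. Qed.
Lemma evB (w : M -> M) P Q z : ev w (P - Q) z = ev w P z - ev w Q z.
Proof. by rewrite evD evN. Qed.

Lemma evCM (w : M -> M) c P z : ev w (c%:P * P) z = c *: ev w P z.
Proof.
rewrite (@ev_bound w _ (size P)); last by rewrite mul_polyC size_scale_leq.
by rewrite /ev scaler_sumr; apply: eq_bigr => i _; rewrite coefCM scalerA.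
Qed.

Lemma evMX (w : M -> M) P z : ev w (P * 'X) z = ev w P (w z).
Proof.
rewrite (@ev_bound w _ (size P).+1); last first.
  have [->|nz] := eqVneq P 0; first by rewrite mul0r size_poly0.
  by rewrite size_mulX.
rewrite big_ord_recl coefMX /= scale0r add0r /ev.
by apply: eq_bigr => i _; rewrite coefMX /= add0n -iterS iterSr.
Qed.

Lemma ev1 (w : M -> M) z : ev w 1 z = z.
Proof. by rewrite /ev size_poly1 big_ord1 coefC /= scale1r. Qed.

Lemma evC (w : M -> M) c z : ev w c%:P z = c *: z.
Proof. by rewrite -[c%:P]mulr1 evCM ev1. Qed.

Lemma evX (w : M -> M) z : ev w 'X z = w z.
Proof. by rewrite -[X in ev _ X]mul1r evMX ev1. Qed.

Lemma ev_comm (w : M -> M) P z : linear w -> w (ev w P z) = ev w P (w z).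
Proof.
move=> Hw; rewrite /ev lin_sum //; apply: eq_bigr => i _.
by rewrite linZ // -iterS iterSr.
Qed.

Lemma evM (w : M -> M) P Q z : linear w -> ev w (P * Q) z = ev w P (ev w Q z).
Proof.
move=> Hw; elim/poly_ind: P z => [|P c IH] z.
  by rewrite mul0r !ev0.
rewrite mulrDl -mulrA (mulrC 'X) mulrA evD evMX IH evCM evD evMX evC.
by rewrite ev_comm.
Qed.

Lemma evA (w : M -> M) P : A w -> A (ev w P).
Proof.
move=> Hw; rewrite /ev; move: (size P) => n.
elim: n => [|n IH].
  have := A_zero; congr A; apply: functional_extensionality => x; by rewrite big_ord0.
have := A_add IH (A_scale P`_n (A_iter n Hw)); congr A.
by apply: functional_extensionality => x; rewrite big_ord_recr.
Qed.


Lemma ev_one_sub w c Q z : ev w (1 - c%:P * Q) z = z - c *: ev w Q z.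
Proof. by rewrite evB ev1 evCM. Qed.

Lemma binom_split (x : {poly k}) n :
  (1 + x) ^+ n = 1 + x * \sum_(i < n) x ^+ i *+ 'C(n, i.+1).
Proof.
rewrite addrC exprD1n big_ord_recl /= expr0 bin0 mulr1n mulr_sumr.
by congr (_ + _); apply: eq_bigr => i _; rewrite mulrnAr -exprS.
Qed.

Lemma scal_inj_p (p : nat) : p_good p%:R A -> forall z : M, p%:R *: z = 0 -> z = 0.
Proof.
move=> Hg z Hz; apply: (Hg _ A_zero) => /=.
by rewrite !scaler0 !subr0 Hz scaler0.
Qed.

Section Unif.
Variables (p : nat) (pi : k).
Hypothesis Hpg : p_good p%:R A.
Hypothesis Hpip : exists h, pi ^+ p = p%:R * h.

Lemma inj_pi w W : A w -> injective (ev w (1 - pi%:P * W)).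
Proof.
move=> Hw a b Hab; case: Hpip => h Hh.
set x := pi%:P * W.
pose H := \sum_(i < p) x ^+ i.
have E : H * (1 - x) = 1 - p%:R%:P * (h%:P * W ^+ p).
  have E1 := subrX1 x p.
  rewrite mulrC -[1 - x]opprB mulNr -E1 opprB /x exprMn -polyC_exp Hh polyCM.
  by rewrite mulrA.
have HwL := A_lin Hw.
have := congr1 (ev w H) Hab; rewrite -!evM // E !ev_one_sub => E2.
apply: (Hpg (evA (h%:P * W ^+ p) Hw)) => /=; by rewrite E2.
Qed.

Lemma kill w X0 R V W u :
  A w -> (forall z : M, u *: z = 0 -> z = 0) ->
  (forall z, ev w (X0 * R) z = 0) -> R * V = u%:P * (1 - pi%:P * W) ->
  forall z, ev w X0 z = 0.
Proof.
move=> Hw Hu H0 HRV z.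
have HwL := A_lin Hw.
have E : ev w (u%:P * ((1 - pi%:P * W) * X0)) z = 0.
  by rewrite mulrA -HRV mulrC mulrA evM // H0 (lin0 (A_lin (evA _ Hw))).
rewrite evCM in E; move/Hu: E; rewrite evM // => E.
apply: (@inj_pi w W Hw); by rewrite E ev_one_sub (lin0 (A_lin (evA _ Hw))) scaler0 subr0.
Qed.

End Unif.

Lemma addr_eq_l (z a : M) : z + a = z -> a = 0.
Proof. by move=> H; apply: (addrI z); rewrite addr0. Qed.

Lemma CL p pi d e w m c Y : p_good p%:R A -> (exists h, pi ^+ p = p%:R * h) ->
  p%:R = pi * d -> c = pi * e -> A w -> coprime m p -> (0 < m)%N ->
  (forall z, ev w ((1 + c%:P * Y) ^+ m) z = z) -> forall z, ev w (c%:P * Y) z = 0.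
Proof.
move=> Hg Hpip Hd Hc Hw Hcop Hm Hid.
have HwL := A_lin Hw.
case: (egcdnP p Hm) => km kn Heq _.
move: Hid; rewrite binom_split => Hid.
case: m Hm Hcop Heq Hid => // m _ Hcop Heq Hid.
rewrite big_ord_recl /= expr0 bin1 in Hid.
have Hs : \sum_(i < m) (c%:P * Y) ^+ (bump 0 i) *+ 'C(m.+1, (bump 0 i).+1)
   = (c%:P * Y) * \sum_(i < m) (c%:P * Y) ^+ i *+ 'C(m.+1, i.+2).
  by rewrite mulr_sumr; apply: eq_bigr => i _; rewrite mulrnAr -exprS.
rewrite Hs in Hid.
set R' := \sum_(i < m) _ in Hid.
pose W := - (kn%:R * d%:P + e%:P * Y * R' * km%:R).
apply: (@kill p pi Hg Hpip w (c%:P * Y) _ km%:R W 1 Hw).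
- by move=> z; rewrite scale1r.
- by move=> z; apply: (@addr_eq_l z); rewrite -[z in z + _](ev1 w) -evD; apply: Hid.
have Hm' : ((m.+1)%:R * km%:R : {poly k}) = kn%:R * (pi%:P * d%:P) + 1.
  rewrite -natrM mulnC Heq (eqP Hcop) natrD natrM -[(p%:R : {poly k})]polyC_natr Hd polyCM.
  by [].
rewrite polyC1 Hc polyCM.
rewrite /W; transitivity ((m.+1)%:R * km%:R + pi%:P * e%:P * Y * R' * km%:R); first ring.
rewrite Hm'; ring.
Qed.

Lemma PPp p pi g h w Y : prime p -> p_good p%:R A -> pi ^+ p.-1 = p%:R * h -> A w ->
  (forall z, ev w ((1 + (pi * pi * g)%:P * Y) ^+ p) z = z) ->
  forall z, ev w ((pi * pi * g)%:P * Y) z = 0.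
Proof.
move=> Hpr Hg Hh Hw Hid.
have HwL := A_lin Hw.
have Hpip : exists h', pi ^+ p = p%:R * h'.
  by exists (h * pi); rewrite mulrA -Hh -exprSr prednK // prime_gt0.
have p2 := prime_gt1 Hpr.
set x := (pi * pi * g)%:P * Y.
move: Hid; rewrite binom_split => Hid.
case: p p2 Hpr Hg Hh Hpip Hid => [|[|n]] // _ Hpr Hg Hh Hpip Hid.
rewrite big_ord_recl /= expr0 bin1 in Hid.
have [T HT] : exists T, \sum_(i < n.+1) x ^+ (bump 0 i) *+ 'C(n.+2, (bump 0 i).+1)
     = (n.+2)%:R%:P * (pi%:P * T).
  apply: (big_ind (fun P : {poly k} => exists T, P = (n.+2)%:R%:P * (pi%:P * T))).
  - by exists 0; rewrite !mulr0.
  - by move=> P1 P2 [T1 ->] [T2 ->]; exists (T1 + T2); rewrite !mulrDr.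
  move=> [i Hi] _ /=; rewrite /bump /= add1n.
  case: (ltnP i n) => Hin.
    have /dvdnP [b Hb] : (n.+2 %| 'C(n.+2, i.+2))%N.
      by apply: prime_dvd_bin => //; rewrite /= ltnS ltnS.
    exists (b%:R * ((pi * g)%:P * Y) * x ^+ i).
    rewrite Hb -mulr_natr natrM polyC_natr exprS /x !polyCM.
    set Z := (_ ^+ i); clearbody Z; set P := pi%:P; set G := g%:P; set B := (b%:R : {poly k}); set N := (n.+2%:R : {poly k}); clearbody P G B N; ring.
  have -> : i = n by apply/eqP; rewrite eqn_leq Hin -ltnS Hi.
  rewrite binn mulr1n.
  exists (h%:P * pi%:P ^+ n * (g%:P * Y) ^+ n.+1).
  have HP : pi%:P ^+ n.+1 = (n.+2)%:R * h%:P by rewrite -polyC_exp -[n.+1]/(n.+2.-1) Hh polyCM polyC_natr.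
  rewrite /x !polyCM !exprMn {1}HP exprS. rewrite polyC_natr; set Z1 := pi%:P ^+ n; set Z2 := g%:P ^+ n.+1; set Z3 := Y ^+ n.+1; clearbody Z1 Z2 Z3; ring.
apply: (@kill n.+2 pi Hg Hpip w x _ 1 (- T) (n.+2)%:R Hw).
- exact: scal_inj_p Hg.
- by move=> z; apply: (@addr_eq_l z); rewrite -[z in z + _](ev1 w) -evD; apply: Hid.
by rewrite HT mulr1 polyC_natr; ring.
Qed.


Lemma PPa p pi g h w : prime p -> p_good p%:R A -> pi ^+ p.-1 = p%:R * h -> A w ->
  forall a Y, (forall z, ev w ((1 + (pi * pi * g)%:P * Y) ^+ (p ^ a)) z = z) ->
  forall z, ev w ((pi * pi * g)%:P * Y) z = 0.
Proof.
move=> Hpr Hg Hh Hw; elim=> [|a IH] Y Hid z.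
  apply: (@addr_eq_l z); rewrite -[z in z + _](ev1 w) -evD; have := Hid z.
  by rewrite expn0 expr1.
apply: (PPp Hpr Hg Hh Hw) => z'.
have H1 : forall z0, ev w ((1 + (pi * pi * g)%:P * (Y * \sum_(i < p) ((pi * pi * g)%:P * Y) ^+ i *+ 'C(p, i.+1))) ^+ (p ^ a)) z0 = z0.
  by move=> z0; rewrite mulrA -binom_split -exprM -expnS; apply: Hid.
have := IH _ H1 z'; rewrite mulrA => E.
by rewrite binom_split evD ev1 E addr0.
Qed.


Lemma pow_pred_succ p (pi : k) h : prime p -> pi ^+ p.-1 = p%:R * h ->
  exists h', pi ^+ p = p%:R * h'.
Proof. by move=> Hpr Hh; exists (h * pi); rewrite mulrA -Hh -exprSr prednK // prime_gt0. Qed.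

Lemma scal_inj_pi p (pi : k) d : p_good p%:R A -> p%:R = pi * d ->
  forall z : M, pi *: z = 0 -> z = 0.
Proof.
move=> Hg Hd z Hz; apply: (scal_inj_p Hg); by rewrite Hd mulrC -scalerA Hz scaler0.
Qed.

Lemma core p q pi tau t : prime p -> prime q -> p_good p%:R A -> p_good q%:R A ->
  (exists d, p%:R = pi * d) -> (exists h, pi ^+ p.-1 = p%:R * h) ->
  (exists d, q%:R = tau * d) -> (exists h, tau ^+ q.-1 = q%:R * h) ->
  (p = q -> exists e, tau = pi * e) ->
  A t -> finite_order (fun x => x + (pi * tau) *: t x) -> t = fun _ => 0.
Proof.
move=> Hp Hq Hgp Hgq [dp Hdp] [hp Hhp] [dq Hdq] [hq Hhq] Hpq Ht [n [Hn Hit]].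
have HtL := A_lin Ht.
have Hpip := pow_pred_succ Hp Hhp.
have Hqip := pow_pred_succ Hq Hhq.
have Hev : forall z, ev t ((1 + (pi * tau)%:P * 'X) ^+ n) z = z.
  have E : forall m z, iter m (fun h => (fun x => x + (pi * tau) *: t x) \o h) id z
                     = ev t ((1 + (pi * tau)%:P * 'X) ^+ m) z.
    elim=> [|m IH] z /=; first by rewrite expr0 ev1.
    by rewrite exprS evM // IH evD ev1 evCM evX.
  by move=> z; rewrite -E Hit.
case: (pfactor_coprime Hp Hn) => m Hcop Hnm.
move: Hnm; set a := logn p n => Hnm.
have Hm0 : (0 < m)%N by move: Hn; rewrite Hnm; case: m {Hcop Hnm}.
have Hpa : forall z, ev t ((1 + (pi * tau)%:P * 'X) ^+ (p ^ a)) z = z.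
  move=> z; have Hcop2 : coprime m p by rewrite coprime_sym.
  have H1 : forall z0, ev t ((1 + (pi * tau)%:P * ('X * \sum_(i < p ^ a) ((pi * tau)%:P * 'X) ^+ i *+ 'C(p ^ a, i.+1))) ^+ m) z0 = z0.
    by move=> z0; rewrite mulrA -binom_split -exprM mulnC -Hnm; apply: Hev.
  have := CL Hgp Hpip Hdp (erefl (pi * tau)) Ht Hcop2 Hm0 H1 z.
  by rewrite mulrA => E; rewrite binom_split evD ev1 E addr0.
have Hfin : forall z, ev t ((pi * tau)%:P * 'X) z = 0.
  case: (eqVneq p q) => [Epq | Npq].
    case: (Hpq Epq) => e He.
    move: Hpa; rewrite He mulrA => Hpa.
    exact: (PPa Hp Hgp Hhp Ht Hpa).
  have Hcq : coprime (p ^ a) q.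
    by apply: coprimeXl; rewrite prime_coprime // dvdn_prime2 // Npq.
  have Hpa0 : (0 < p ^ a)%N by rewrite expn_gt0 prime_gt0.
  move: Hpa; rewrite (mulrC pi) => Hpa.
  exact: (CL Hgq Hqip Hdq (erefl (tau * pi)) Ht Hcq Hpa0 Hpa).
apply: functional_extensionality => z.
have := Hfin z; rewrite evCM evX -scalerA => /(scal_inj_pi Hgp Hdp).
exact: (scal_inj_pi Hgq Hdq).
Qed.

End Lin.

Lemma prod_formula (z : algC) p : prime p -> p.-primitive_root z ->
  \prod_(1 <= i < p) (1 - z ^+ i) = p%:R.
Proof.
move=> Hp Hz.
have H := factor_Xn_sub_1 Hz.
rewrite big_ltn ?prime_gt0 // expr0 polyC1 subrX1 in H.
have Hn0 : ('X - 1 : {poly algC}) != 0 by rewrite -polyC1 polyXsubC_eq0.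
have H2 := mulfI Hn0 H.
have := congr1 (fun P => P.[1]) H2 => /=.
rewrite horner_prod horner_sum.
under eq_bigr do rewrite hornerXsubC.
under [in X in _ = X -> _]eq_bigr do rewrite hornerXn expr1n.
by rewrite sumr_const card_ord => ->.
Qed.


Section NT.
Variables (a b : algC) (p : nat) (zeta : Zgen a b).
Hypothesis Hp : prime p.
Hypothesis Hz : p.-primitive_root (val zeta).

Lemma zprod : \prod_(1 <= i < p) (1 - zeta ^+ i) = p%:R.
Proof.
apply: val_inj; rewrite rmorph_prod rmorph_nat -(prod_formula Hp Hz).
by apply: eq_bigr => i _; rewrite rmorphB rmorph1 rmorphXn.
Qed.

Lemma zinv i : (0 < i < p)%N -> exists t, (zeta ^+ i) ^+ t = zeta.
Proof.
move=> /andP [H0 H1].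
have Hc : coprime i p by rewrite coprime_sym prime_coprime // gtnNdvd.
have Hz' : p.-primitive_root (val zeta ^+ i) by rewrite prim_root_exp_coprime.
have [t Ht] := prim_rootP Hz' (prim_expr_order Hz).
exists t; apply: val_inj; by rewrite !rmorphXn /= -Ht.
Qed.

Lemma one_sub_exp j : exists e, 1 - zeta ^+ j = (1 - zeta) * e.
Proof.
exists (\sum_(l < j) zeta ^+ l).
by rewrite -[LHS]opprB subrX1 -mulNr opprB.
Qed.

Lemma unif_d : exists d, p%:R = (1 - zeta) * d.
Proof.
have [p' Hp'] : exists p', p = p'.+2 by case: p Hp => [|[|n]] //; exists n.
have E : forall i, exists e, 1 - zeta ^+ i = (1 - zeta) * e by move=> i; exact: one_sub_exp.
have [D HD] : exists D, \prod_(1 <= i < p) (1 - zeta ^+ i) = (1 - zeta) ^+ (p.-1) * D.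
  rewrite -subn1 -(prodr_const_nat 1 p (1 - zeta)).
  apply: (big_ind2 (fun X Y => exists G, X = Y * G)).
  - by exists 1; rewrite mulr1.
  - by move=> x1 x2 y1 y2 [G1 ->] [G2 ->]; exists (G1 * G2); ring.
  move=> i _; exact: E.
exists ((1 - zeta) ^+ p' * D).
by rewrite -zprod HD Hp' /= exprS mulrA.
Qed.

Lemma unif_h : exists h, (1 - zeta) ^+ p.-1 = p%:R * h.
Proof.
rewrite -subn1 -(prodr_const_nat 1 p (1 - zeta)) -zprod.
rewrite (big_nat_cond _ _ _ _ _ (fun i => 1 - zeta)) (big_nat_cond _ _ _ _ _ (fun i => 1 - zeta ^+ i)).
apply: (big_ind2 (fun X Y => exists G, X = Y * G)).
- by exists 1; rewrite mulr1.
- by move=> x1 x2 y1 y2 [G1 ->] [G2 ->]; exists (G1 * G2); ring.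
move=> i; rewrite andbT => /andP [H0 H1].
have [t Ht] : exists t, (zeta ^+ i) ^+ t = zeta by apply: zinv; rewrite H0.
exists (\sum_(l < t) (zeta ^+ i) ^+ l).
by rewrite -{1}Ht -[LHS]opprB subrX1 -mulNr opprB.
Qed.
End NT.

Lemma zmod5 (V : zmodType) (a b c d e : V) : a + b + (c + d) = a + c + (b + e) + (d - e).
Proof. rewrite -!addrA; congr (_ + _); rewrite addrCA; congr (_ + (_ + _)); by rewrite addrCA subrr addr0. Qed.

Theorem mainTheorem19 (p q : nat) (zp zq : algC)
  (Hp : prime p) (Hq : prime q)
  (Hzp : p.-primitive_root zp) (Hzq : q.-primitive_root zq)
  (M : lmodType (Zgen zp zq)) (A : (M -> M) -> Prop)
  (HA : k_subalgebra A)
  (HAp : p_good p%:R A) (HAq : p_good q%:R A) :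
  let pi : Zgen zp zq := 1 - zgl zp zq in
  let tau : Zgen zp zq := 1 - zgr zp zq in
  (forall s, A s ->
     let u := fun x => x + (pi * tau) *: s x in
     unit_of A u -> torsion_gen (fun g => g = u) ->
     s = (fun _ => 0))
  /\
  (forall s r, A s -> A r ->
     let u := fun x => x + pi *: s x in
     let v := fun x => x + tau *: r x in
     unit_of A u -> unit_of A v ->
     torsion_gen (fun g => g = u \/ g = v) ->
     u \o v = v \o u).
Proof.
move=> pi tau.
have Hd1 := @unif_d zp zq p (zgl zp zq) Hp Hzp.
have Hh1 := @unif_h zp zq p (zgl zp zq) Hp Hzp.
have Hd2 := @unif_d zp zq q (zgr zp zq) Hq Hzq.
have Hh2 := @unif_h zp zq q (zgr zp zq) Hq Hzq.
have Hpq : p = q -> exists e, tau = pi * e.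
  move=> Epq; subst q.
  have [j Hj] := prim_rootP Hzp (prim_expr_order Hzq).
  rewrite /tau /pi; have -> : zgr zp zq = zgl zp zq ^+ j by apply: val_inj; rewrite rmorphXn.
  exact: one_sub_exp.
have Core := fun t Ht Hfo => @core _ M A HA p q pi tau t Hp Hq HAp HAq Hd1 Hh1 Hd2 Hh2 Hpq Ht Hfo.
split.
  move=> s Hs u _ Htor.
  exact: (Core s Hs (Htor u (gg_gen (erefl u)))).
move=> s r Hs Hr u v [Au [u' [Au' Huu' Hu'u]]] [Av [v' [Av' Hvv' Hv'v]]] Htor.
have HsL := A_lin HA Hs; have HrL := A_lin HA Hr.
pose t := fun x => s (r (u' (v' x))) - r (s (u' (v' x))).
have At : A t.
  exact: (A_sub HA (A_comp HA Hs (A_comp HA Hr (A_comp HA Au' Av')))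
                   (A_comp HA Hr (A_comp HA Hs (A_comp HA Au' Av')))).
have Huv : forall y, u (v y) = v (u y) + (pi * tau) *: (s (r y) - r (s y)).
  move=> y; rewrite /u /v (linD HsL) (linD HrL) (linZ HsL) (linZ HrL) scalerBr !scalerDr !scalerA (mulrC tau pi).
  exact: zmod5.
have Ec : (u \o v) \o (u' \o v') = fun x => x + (pi * tau) *: t x.
  apply: functional_extensionality => x /=.
  rewrite Huv; congr (_ + _).
  have -> : u (u' (v' x)) = v' x by have := congr1 (fun f => f (v' x)) Huu'.
  by have := congr1 (fun f => f x) Hvv'.
have Hfo : finite_order (fun x => x + (pi * tau) *: t x).
  rewrite -Ec; apply: Htor.
  apply: gg_mul; apply: gg_mul.
  - by apply: gg_gen; left.
  - by apply: gg_gen; right.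
  - by apply: (gg_inv (gg_gen (or_introl erefl)) Huu' Hu'u).
  - by apply: (gg_inv (gg_gen (or_intror erefl)) Hvv' Hv'v).
have Ht0 := Core t At Hfo.
apply: functional_extensionality => x /=.
have E := congr1 (fun f => f (v (u x))) Ec.
rewrite /= Ht0 scaler0 addr0 in E.
rewrite -E.
have -> : v' (v (u x)) = u x by have := congr1 (fun f => f (u x)) Hv'v.
by have -> : u' (u x) = x by have := congr1 (fun f => f x) Hu'u.
Qed.
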